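(* Let $K$ be an algebraically closed field with a nontrivial non-Archimedean valuation. (i) For $n=1$, for every finite quiver $Q$, every $Q$-representation $R$ with $R_i=K^1$ for all vertices $i$, and every dimension vector $\mathbf{d}$, one has $\operatorname{QDr}(R,\mathbf{d};1)=\overline{\operatorname{trop}}(\operatorname{QGr}(R,\mathbf{d};1))$. (ii) For every $n\ge2$, for every finite quiver $Q$, $Q$-representation $R$ with $R_i=K^n$ and dimension vector $\mathbf{d}$, one has $\overline{\operatorname{trop}}(\operatorname{QGr}(R,\mathbf{d};n))\subseteq\operatorname{QDr}(R,\mathbf{d};n)$, and there exist a finite quiver $Q$, a $Q$-representation $R$ with $R_i=K^n$, and a dimension vector $\mathbf{d}$ for which this containment is strict.
   Context: A finite quiver $Q=(V,A,s,t)$; a $Q$-representation $R$ assigns $R_i=K^n$ to each vertex and a matrix $A^{\alpha}\in K^{n\times n}$ to each arrow $\alpha$. A dimension vector is $\mathbf{d}=(d_i)_{i\in V}$ with $0\le d_i\le n$. A subrepresentation consists of subspaces $N_i\subseteq K^n$ with $A^\alpha N_{s(\alpha)}\subseteq N_{t(\alpha)}$. $\operatorname{QGr}(R,\mathbf{d};n)$ is the set of subrepresentations with $\dim N_i=d_i$, embedded in $\prod_i\mathbb{P}^{\binom{n}{d_i}-1}$ via Plücker coordinates; $\overline{\operatorname{trop}}(\operatorname{QGr}(R,\mathbf{d};n))$ is the Euclidean closure in $\prod_i\mathbb{P}(\mathbb{T}^{\binom{n}{d_i}})$ of the coordinatewise valuations of its points, where $\mathbb{T}=\mathbb{R}\cup\{\infty\}$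 and $\mathbb{P}(\mathbb{T}^N)=(\mathbb{T}^N\setminus\{(\infty,\dots,\infty)\})/\mathbb{R}\mathbf{1}$. Quiver Dressian $\operatorname{QDr}(R,\mathbf{d};n)$: tuples $(p^{(i)})_{i\in V}$, $p^{(i)}\in\mathbb{P}(\mathbb{T}^{\binom{n}{d_i}})$, such that for each vertex $i$ ($r=d_i$) and all $I\in\binom{[n]}{r-1}$, $J\in\binom{[n]}{r+1}$ the minimum $\min_{j\in J\setminus I}(p^{(i)}_{I\cup j}+p^{(i)}_{J\setminus j})$ is attained at least twice, and for each arrow $\alpha$ ($r=d_{s(\alpha)}$, $s=d_{t(\alpha)}$) and all $I\in\binom{[n]}{r-1}$, $J\in\binom{[n]}{s+1}$ the minimum $\min_{j\in[n]\setminus I,i\in J}(\mathrm{val}(A^{\alpha}_{i,j})+p^{(s(\alpha))}_{I\cup j}+p^{(t(\alpha))}_{J\setminus i})$ is attained at least twice (a minimum equal to $\infty$ counts as attained twice). These are the tropicalizations of the Grassmann–Plücker relations and of the quiver Plücker relations $\sum_{j\in[n]\setminus I,i\in J}\pm(A^\alpha)_{i,j}p_{I\cup j}p_{J\setminus i}$, whose common zero set is $\operatorname{QGr}(R,\mathbf{d};n)$. *)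

(* Defs.v *)
From HB Require Import structures.
From mathcomp Require Import all_boot all_order all_algebra.
From mathcomp Require Import all_classical all_reals all_analysis.
Unset Printing Implicit Defensive.
Import Order.TTheory GRing.Theory Num.Theory.
Local Open Scope classical_set_scope.
Local Open Scope ring_scope.

Definition nontriv_nonarch_valuation {K : fieldType} {R : realType}
    (v : K -> \bar R) : Prop :=
  [/\ (forall x, v x = +oo%E <-> x = 0),
      (forall x, v x != -oo%E),
      (forall x y, v (x * y)%R = (v x + v y)%E),
      (forall x y, (Order.min (v x) (v y) <= v (x + y)%R)%E)
    & (exists x, x != 0 /\ v x != 0%E)].

(* Plücker coordinates of all vertices are gathered into one finite index type:
   pairs (vertex i, subset I of [n]) with #|I| = d_i. *)
Definition Coord (V : finType) (n : nat) (d : V -> nat) : finType :=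
  {x : V * {set 'I_n} | #|x.2| == d x.1}.

(* The Plücker coordinate p_I of the row space of B (a d x n matrix, whose rows
   form a basis of the subspace), i.e. the maximal minor on the columns in I
   (taken in increasing order). *)
Definition plucker {K : fieldType} {d n : nat} (B : 'M[K]_(d, n))
    (I : {set 'I_n}) (h : #|I| = d) : K :=
  \det (\matrix_(r < d, c < d) B r (enum_val (cast_ord (esym h) c))).

(* Reading a tropical Plücker vector at (i, X); junk value +oo if #|X| != d_i
   (never used with such X below). *)
Definition pcoord {R : realType} {V : finType} {n : nat} {d : V -> nat}
    (p : Coord V n d -> \bar R) (i : V) (X : {set 'I_n}) : \bar R :=
  if insub (i, X) is Some c then p c else +oo%E.

Definition min_twice {R : realType} {T : finType} (P : pred T) (f : T -> \bar R) :
    Prop :=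
  let m := \big[Order.min/+oo%E]_(t | P t) f t in
  m = +oo%E \/
  exists t1 t2, [/\ t1 != t2, P t1, P t2, f t1 = m & f t2 = m].

(* The ambient space: tuples (p^(i))_i with p^(i) in T^{binom(n,d_i)} \ {(oo,..,oo)}
   (representatives of points of prod_i P(T^{binom(n,d_i)})). *)
Definition tropproj {R : realType} {V : finType} {n : nat} {d : V -> nat} :
    set (Coord V n d -> \bar R) :=
  [set p | (forall x, p x != -oo%E) /\
           (forall i : V, exists x : Coord V n d, (val x).1 = i /\ p x != +oo%E)].

(* Quiver Dressian (as a set of representatives; it is invariant under
   adding a real constant to each p^(i)). *)
Definition QDr {K : fieldType} {R : realType} (v : K -> \bar R)
    {V Arr : finType} (src tgt : Arr -> V) {n : nat} (A : Arr -> 'M[K]_n)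
    (d : V -> nat) : set (Coord V n d -> \bar R) :=
  [set p | tropproj p /\
    (forall (i : V) (I J : {set 'I_n}), #|I|.+1 = d i -> #|J| = (d i).+1 ->
       min_twice (fun j : 'I_n => (j \in J) && (j \notin I))
         (fun j => pcoord p i (j |: I) + pcoord p i (J :\ j))%E) /\
    (forall (a : Arr) (I J : {set 'I_n}),
       #|I|.+1 = d (src a) -> #|J| = (d (tgt a)).+1 ->
       min_twice (fun ji : 'I_n * 'I_n => (ji.1 \notin I) && (ji.2 \in J))
         (fun ji => v (A a ji.2 ji.1) + pcoord p (src a) (ji.1 |: I)
                    + pcoord p (tgt a) (J :\ ji.2))%E)].

Definition plucker_vec {K : fieldType} {V : finType} {n : nat} {d : V -> nat}
    (B : forall i : V, 'M[K]_(d i, n)) (x : Coord V n d) : K :=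
  plucker (B (val x).1) (val x).2 (eqP (valP x)).

(* Tropicalization of QGr(R,d;n): coordinatewise valuations of the Plücker
   coordinates of subrepresentations (N_i = row space of B_i, of dimension d_i;
   A^a N_{s(a)} ⊆ N_{t(a)} in column-vector convention, i.e.
   rowspace(B_s * (A^a)^T) ⊆ rowspace(B_t)), up to a real shift per vertex. *)
Definition tropQGr {K : fieldType} {R : realType} (v : K -> \bar R)
    {V Arr : finType} (src tgt : Arr -> V) {n : nat} (A : Arr -> 'M[K]_n)
    (d : V -> nat) : set (Coord V n d -> \bar R) :=
  [set p | exists (B : forall i : V, 'M[K]_(d i, n)) (c : V -> R),
    [/\ (forall i, row_free (B i)),
        (forall a, (B (src a) *m (A a)^T <= B (tgt a))%MS)
      & (forall x, p x = (v (plucker_vec B x) + (c (val x).1)%:E)%E)]].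

(* Euclidean closure inside prod_i P(T^{binom(n,d_i)}); since tropQGr is
   invariant under the shifts and the quotient map is open, this is the
   preimage of the closure in the quotient. *)
Definition tropQGr_closure {K : fieldType} {R : realType} (v : K -> \bar R)
    {V Arr : finType} (src tgt : Arr -> V) {n : nat} (A : Arr -> 'M[K]_n)
    (d : V -> nat) : set (Coord V n d -> \bar R) :=
  @closure {ptws Coord V n d -> \bar R} (tropQGr v src tgt A d) `&` @tropproj R V n d.

(* Main.v *)
Require Import Defs.
From HB Require Import structures.
From mathcomp Require Import all_boot all_order all_algebra.
From mathcomp Require Import all_classical all_reals all_analysis.
From mathcomp Require Import perm.
From mathcomp Require Import ring lra.
Import Order.TTheory GRing.Theory Num.Theory.
Local Open Scope classical_set_scope.
Local Open Scope ring_scope.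

Set Implicit Arguments.
Section Alg.
Variable K : fieldType.

Definition sgnu (e : K) := e * e = 1.

Lemma sgnu_sign (b : bool) : sgnu ((-1) ^+ b).
Proof. by case: b; rewrite /sgnu ?expr1 ?expr0 ?mulr1 // mulrNN mulr1. Qed.

Lemma sgnuM a b : sgnu a -> sgnu b -> sgnu (a * b).
Proof. by rewrite /sgnu => ha hb; rewrite mulrACA ha hb mulr1. Qed.

Lemma det_reindex r n (C : 'M[K]_(r, n)) (f g : 'I_r -> 'I_n) :
  injective f -> injective g -> (forall c, exists c', g c' = f c) ->
  exists e, sgnu e /\ \det (colsub f C) = e * \det (colsub g C).
Proof.
move=> fi gi fg.
pose sg c := odflt c [pick c' | g c' == f c].
have sgE c : g (sg c) = f c.
  rewrite /sg; case: pickP => [c' /eqP //|/= H].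
  by have [c' e] := fg c; move: (H c'); rewrite e eqxx.
have sgi : injective sg by move=> a b e; apply: fi; rewrite -!sgE e.
pose s := perm sgi.
have -> : colsub f C = col_perm s (colsub g C).
  by apply/matrixP => i j; rewrite !mxE permE sgE.
rewrite col_permE det_mulmx det_perm mulrC.
by exists ((-1) ^+ odd_perm (s^-1)%g); split => //; exact: sgnu_sign.
Qed.

Definition enumS {n} {S : {set 'I_n}} {r} (h : #|S| = r) (c : 'I_r) : 'I_n :=
  enum_val (cast_ord (esym h) c).

Lemma enumS_inj n (S : {set 'I_n}) r (h : #|S| = r) : injective (enumS h).
Proof. by move=> a b /enum_val_inj /cast_ord_inj. Qed.

Lemma enumS_mem n (S : {set 'I_n}) r (h : #|S| = r) c : enumS h c \in S.
Proof. by rewrite /enumS; apply: enum_valP. Qed.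

Lemma enumS_surj n (S : {set 'I_n}) r (h : #|S| = r) j : j \in S ->
  exists c, enumS h c = j.
Proof.
move=> jS; exists (cast_ord h (enum_rank_in jS j)).
by rewrite /enumS cast_ordK enum_rankK_in.
Qed.

Lemma pluckerE r n (C : 'M[K]_(r, n)) (S : {set 'I_n}) (h : #|S| = r) :
  plucker C S h = \det (colsub (enumS h) C).
Proof. by rewrite /plucker; congr (\det _); apply/matrixP => i j; rewrite !mxE. Qed.

Lemma det_plucker r n (C : 'M[K]_(r, n)) (S : {set 'I_n}) (h : #|S| = r) (f : 'I_r -> 'I_n) :
  injective f -> (forall c, f c \in S) ->
  exists e, sgnu e /\ \det (colsub f C) = e * plucker C S h.
Proof.
move=> fi fS; rewrite pluckerE; apply: det_reindex => //; first exact: enumS_inj.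
by move=> c; apply: enumS_surj.
Qed.

Lemma det_noninj r n (C : 'M[K]_(r, n)) (f : 'I_r -> 'I_n) c1 c2 :
  c1 != c2 -> f c1 = f c2 -> \det (colsub f C) = 0.
Proof.
move=> ne e; rewrite -det_tr; apply: (determinant_alternate ne) => j.
by rewrite !mxE e.
Qed.

Lemma cramer s n (C : 'M[K]_(s, n)) (e : 'I_s.+1 -> 'I_n) (l : 'I_s) :
  \sum_(k < s.+1) C l (e k) * ((-1) ^+ k * \det (colsub (fun b => e (lift k b)) C)) = 0.
Proof.
pose M : 'M[K]_s.+1 := \matrix_(a, k) C (if unlift 0 a is Some a' then a' else l) (e k).
have : \det M = 0.
  apply: (@determinant_alternate _ _ _ 0 (lift 0 l)); first exact: neq_lift.
  by move=> k; rewrite !mxE unlift_none liftK.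
move=> H; rewrite -[RHS]H (expand_det_row _ 0); apply: eq_bigr => k _.
rewrite !mxE unlift_none /cofactor add0n; congr (_ * (_ * _)).
by congr (\det _); apply/matrixP => a b; rewrite !mxE liftK.
Qed.

Definition Nmx m n (B : 'M[K]_(m.+1, n)) (g : 'I_m -> 'I_n) (j : 'I_n) :=
  colsub (fun c : 'I_m.+1 => if unlift 0 c is Some c' then g c' else j) B.

Lemma Nmx_expand m n (B : 'M[K]_(m.+1, n)) g j :
  \det (Nmx B g j) = \sum_(l < m.+1) B l j * ((-1) ^+ (l + 0) * \det (row' l (colsub g B))).
Proof.
rewrite (expand_det_col _ 0); apply: eq_bigr => l _.
rewrite !mxE unlift_none /cofactor; congr (_ * (_ * _)).
by congr (\det _); apply/matrixP => a b; rewrite !mxE liftK.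
Qed.


Lemma Nmx_zero m n (B : 'M[K]_(m.+1, n)) (I : {set 'I_n}) (hI : #|I| = m) j :
  j \in I -> \det (Nmx B (enumS hI) j) = 0.
Proof.
move=> jI; have [c' ec] := enumS_surj hI jI.
apply: (@det_noninj _ _ _ _ 0 (lift 0 c')); first exact: neq_lift.
by rewrite unlift_none liftK.
Qed.

Lemma Nmx_pl m n (B : 'M[K]_(m.+1, n)) (I : {set 'I_n}) (hI : #|I| = m) j
  (h1 : #|j |: I| = m.+1) :
  j \notin I -> exists u, sgnu u /\ \det (Nmx B (enumS hI) j) = u * plucker B (j |: I) h1.
Proof.
move=> jI; apply: det_plucker.
  move=> a b; case: unliftP => [a' ->|->]; case: unliftP => [b' ->|->] //.
  - by move/enumS_inj => ->.
  - by move=> e; move: jI; rewrite -e enumS_mem.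
  - by move=> e; move: jI; rewrite e enumS_mem.
move=> c; case: unliftP => [c' _|_]; rewrite !inE ?eqxx //.
by rewrite enumS_mem orbT.
Qed.

Lemma cof_pl s n (C : 'M[K]_(s, n)) (J : {set 'I_n}) (hJ : #|J| = s.+1) k
  (h2 : #|J :\ enumS hJ k| = s) :
  exists u, sgnu u /\ (-1) ^+ k * \det (colsub (fun b => enumS hJ (lift k b)) C)
    = u * plucker C (J :\ enumS hJ k) h2.
Proof.
have [u [su ->]] : exists u, sgnu u /\ \det (colsub (fun b => enumS hJ (lift k b)) C)
    = u * plucker C (J :\ enumS hJ k) h2.
  apply: det_plucker.
    by move=> a b /enumS_inj /lift_inj.
  move=> b; rewrite !inE enumS_mem andbT.
  by apply: contra (neq_lift k b) => /eqP /enumS_inj ->.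
exists ((-1) ^+ k * u); split; last by rewrite mulrA.
by apply: sgnuM => //; rewrite -signr_odd; exact: sgnu_sign.
Qed.

Lemma sum_enum_pred n r (J : {set 'I_n}) (hJ : #|J| = r) (F : 'I_r -> 'I_n -> K) :
  \sum_i \sum_(k | enumS hJ k == i) F k i = \sum_k F k (enumS hJ k).
Proof.
under eq_bigr do rewrite big_mkcond.
rewrite exchange_big /=; apply: eq_bigr => k _; rewrite -big_mkcond /=.
by rewrite (big_pred1 (enumS hJ k)) // => i /=; rewrite eq_sym.
Qed.

Lemma sum_enum_one n r (J : {set 'I_n}) (hJ : #|J| = r) (F : 'I_r -> K) j :
  j \in J -> exists k, enumS hJ k = j /\ \sum_(k | enumS hJ k == j) F k = F k.
Proof.
move=> jJ; have [k ek] := enumS_surj hJ jJ; exists k; split => //.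
apply: big_pred1 => k' /=; apply/eqP/eqP => [e|->//].
by apply: (@enumS_inj _ _ _ hJ); rewrite e ek.
Qed.

Lemma sum_enum_none n r (J : {set 'I_n}) (hJ : #|J| = r) (F : 'I_r -> K) j :
  j \notin J -> \sum_(k | enumS hJ k == j) F k = 0.
Proof.
move=> jJ; apply: big_pred0 => k /=; apply: contraNF jJ => /eqP <-.
exact: enumS_mem.
Qed.


Lemma GP_alg r n (B : 'M[K]_(r,n)) (I J : {set 'I_n}) : #|I|.+1 = r -> #|J| = r.+1 ->
  exists H : 'I_n -> K,
  \sum_(j | (j \in J) && (j \notin I)) H j = 0 /\
  (forall j, (j \in J) && (j \notin I) -> forall (h1 : #|j |: I| = r) (h2 : #|J :\ j| = r),
     exists u, sgnu u /\ H j = u * (plucker B (j |: I) h1 * plucker B (J :\ j) h2)).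
Proof.
move=> hI hJ; subst r.
pose hI' : #|I| = #|I| := erefl.
pose g := enumS hI'. pose e := enumS hJ.
pose c (k : 'I_#|I|.+2) := (-1) ^+ k * \det (colsub (fun b => e (lift k b)) B).
exists (fun j => \sum_(k | e k == j) c k * \det (Nmx B g j)); split.
- rewrite big_mkcond /=.
  transitivity (\sum_j \sum_(k | e k == j) c k * \det (Nmx B g j)).
    apply: eq_bigr => j _; case: ifP => // /negbT; rewrite negb_and negbK => /orP[jJ|jI].
      by rewrite sum_enum_none.
    by rewrite big1 // => k _; rewrite Nmx_zero ?mulr0.
  rewrite (sum_enum_pred hJ (fun k j => c k * \det (Nmx B g j))).
  under eq_bigr do rewrite Nmx_expand big_distrr /=.
  rewrite exchange_big /= big1 // => l _.
  transitivity (\sum_k B l (e k) * c k * ((-1) ^+ (l + 0) * \det (row' l (colsub g B)))).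
    by apply: eq_bigr => k _; rewrite mulrA [c k * _]mulrC.
  by rewrite -big_distrl /= (cramer B e l) mul0r.
- move=> j /andP[jJ jI] h1 h2.
  have [k [ek ->]] := sum_enum_one hJ (fun k => c k * \det (Nmx B g j)) jJ.
  subst j.
  have [u1 [su1 e1]] := Nmx_pl B hI' h1 jI.
  have [u2 [su2 e2]] := cof_pl B hJ k h2.
  exists (u2 * u1); split; first exact: sgnuM.
  rewrite /c /g e1 e2; ring.
Qed.

Lemma keyQ m s n (Bs : 'M[K]_(m.+1,n)) (Bt : 'M[K]_(s,n)) (A : 'M[K]_n) D g i :
  Bs *m A^T = D *m Bt ->
  \sum_j A i j * \det (Nmx Bs g j) =
  \sum_(l' < s) (\sum_(l < m.+1) (-1) ^+ (l + 0) * \det (row' l (colsub g Bs)) * D l l') * Bt l' i.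
Proof.
move=> hD.
transitivity (\sum_l (Bs *m A^T) l i * ((-1) ^+ (l + 0) * \det (row' l (colsub g Bs)))).
  under eq_bigr do rewrite Nmx_expand big_distrr /=.
  rewrite exchange_big /=; apply: eq_bigr => l _.
  rewrite mxE big_distrl /=; apply: eq_bigr => j _.
  by rewrite mxE; ring.
rewrite hD.
under eq_bigr do rewrite mxE big_distrl /=.
rewrite exchange_big /=; apply: eq_bigr => l' _.
rewrite big_distrl /=; apply: eq_bigr => l _; ring.
Qed.

Lemma Q_alg r s n (Bs : 'M[K]_(r,n)) (Bt : 'M[K]_(s,n)) (A : 'M[K]_n) (I J : {set 'I_n}) :
  (Bs *m A^T <= Bt)%MS -> #|I|.+1 = r -> #|J| = s.+1 ->
  exists H : 'I_n * 'I_n -> K,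
  \sum_(ji | (ji.1 \notin I) && (ji.2 \in J)) H ji = 0 /\
  (forall ji, (ji.1 \notin I) && (ji.2 \in J) ->
     forall (h1 : #|ji.1 |: I| = r) (h2 : #|J :\ ji.2| = s),
     exists u, sgnu u /\ H ji = u * (A ji.2 ji.1 * plucker Bs (ji.1 |: I) h1 * plucker Bt (J :\ ji.2) h2)).
Proof.
move=> /submxP [D hD] hI hJ; subst r.
pose hI' : #|I| = #|I| := erefl.
pose g := enumS hI'. pose e := enumS hJ.
pose c (k : 'I_s.+1) := (-1) ^+ k * \det (colsub (fun b => e (lift k b)) Bt).
exists (fun ji => \sum_(k | e k == ji.2) c k * (A ji.2 ji.1 * \det (Nmx Bs g ji.1))); split.
- rewrite big_mkcond /=.
  transitivity (\sum_j \sum_i \sum_(k | e k == i) c k * (A i j * \det (Nmx Bs g j))).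
    rewrite pair_big /=; apply: eq_bigr => [[j i]] _ /=.
    case: ifP => // /negbT; rewrite negb_and negbK => /orP[jI|iJ].
      by rewrite big1 // => k _; rewrite Nmx_zero ?mulr0.
    by rewrite sum_enum_none.
  under eq_bigr => j _ do rewrite (sum_enum_pred hJ (fun k i => c k * (A i j * \det (Nmx Bs g j)))).
  rewrite exchange_big /=.
  under eq_bigr => k _ do rewrite -big_distrr /= (keyQ _ _ hD).
  under eq_bigr => k _ do rewrite big_distrr /=.
  rewrite exchange_big /= big1 // => l' _.
  set W := (\sum_(l0 < #|I|.+1) _).
  transitivity (\sum_k Bt l' (e k) * c k * W).
    by apply: eq_bigr => k _; ring.
  by rewrite -big_distrl /= (cramer Bt e l') mul0r.
- move=> [j i] /andP[/= jI iJ] /= h1 h2.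
  have [k [ek ->]] := sum_enum_one hJ (fun k => c k * (A i j * \det (Nmx Bs g j))) iJ.
  subst i.
  have [u1 [su1 e1]] := Nmx_pl Bs hI' h1 jI.
  have [u2 [su2 e2]] := cof_pl Bt hJ k h2.
  exists (u2 * u1); split; first exact: sgnuM.
  rewrite /c /g e1 e2; ring.
Qed.

End Alg.
Unset Implicit Arguments.

Lemma min_attained {R : realType} {U : finType} (P : pred U) (F : U -> \bar R) :
  \big[Order.min/+oo%E]_(t | P t) F t != +oo%E ->
  exists2 t, P t & F t = \big[Order.min/+oo%E]_(t | P t) F t.
Proof.
case: (pickP P) => [j Pj | P0]; last by rewrite big_pred0 // eqxx.
have [i0 Pi0 ->] := @eq_bigmin _ _ _ +oo%E j P F Pj (fun i _ => leey (F i)).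
by move=> _; exists i0.
Qed.

Section Topo.
Context {R : realType} {T : finType}.
Local Open Scope ereal_scope.

Definition semic (p : {ptws T -> \bar R}) (g : (T -> \bar R) -> \bar R) :=
  (forall r, r < g p -> nbhs p (fun q : T -> \bar R => r < g q)) /\
  (forall r, g p < r -> nbhs p (fun q : T -> \bar R => g q < r)).

Lemma semic_proj (p : {ptws T -> \bar R}) x : semic p (fun q => q x).
Proof.
split=> r h; have := @proj_continuous T (fun _ => \bar R) x p.
  move=> /(_ [set y | r < y]) H; apply: H.
  by apply: open_nbhs_nbhs; split => //; exact: open_ereal_gt_ereal.
move=> /(_ [set y | y < r]) H; apply: H.
by apply: open_nbhs_nbhs; split => //; exact: open_ereal_lt_ereal.
Qed.

Lemma semic_cst (p : {ptws T -> \bar R}) c : semic p (fun _ => c).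
Proof. by split=> r h; apply: (nearW (nbhs_filter p)) => _. Qed.

Lemma ereal_dense (x y : \bar R) : x < y -> exists s : R, x < s%:E < y.
Proof.
case: x => [a| |]; case: y => [b| |] //=; rewrite ?lte_fin => h.
- exists ((a + b) / 2)%R; rewrite !lte_fin; apply/andP; split.
    by rewrite ltr_pdivlMr // mulr2n mulrDr mulr1 ltrD2l.
  by rewrite ltr_pdivrMr // mulr2n mulrDr mulr1 ltrD2r.
- by exists (a + 1)%R; rewrite !lte_fin ltey andbT ltrDl.
- by exists (b - 1)%R; rewrite !lte_fin ltNye /= gtrDl ltrN10.
- by exists 0%R; rewrite ltey ltNye.
Qed.

Lemma eq_le' (x y : R) : x = y -> (x <= y)%R. Proof. by move->. Qed.

Lemma split_lower (a b r : \bar R) : a != -oo -> b != -oo -> r < a + b ->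
  exists r1 r2, [/\ r1 < a, r2 < b & r <= r1 + r2].
Proof.
move=> ha hb h.
have [s2 /andP[_ hs2]] : exists s : R, -oo < s%:E < b by apply: ereal_dense; rewrite ltNye.
have [s1 /andP[_ hs1]] : exists s : R, -oo < s%:E < a by apply: ereal_dense; rewrite ltNye.
case: r h => [c| |] h; last by exists s1%:E, s2%:E; split => //; exact: leNye.
  2: by move: h; rewrite ltNge leey.
case: a ha h hs1 => [a| |] // _ h hs1.
- case: b hb h hs2 => [b| |] // _ h hs2.
  + exists (a - (a + b - c) / 2)%:E, (b - (a + b - c) / 2)%:E; split.
    * rewrite lte_fin gtrDl oppr_lt0 divr_gt0 // subr_gt0 -lte_fin //.
    * rewrite lte_fin gtrDl oppr_lt0 divr_gt0 // subr_gt0 -lte_fin //.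
    * rewrite -EFinD lee_fin; apply: eq_le'.
      by rewrite addrACA -opprD -splitr opprB addrC subrK.
  + by exists s1%:E, (c - s1)%:E; split => //; [exact: ltry | rewrite -EFinD addrC subrK].
- by exists (c - s2)%:E, s2%:E; split => //; [exact: ltry | rewrite -EFinD subrK].
Qed.

Lemma split_upper (a b r : \bar R) : a != -oo -> b != -oo -> a + b < r ->
  exists r1 r2, [/\ a < r1, b < r2 & r1 + r2 <= r].
Proof.
move=> ha hb h.
case: r h => [c| |] h; last by move: h; rewrite ltNge leNye.
- case: a ha h => [a| |] // _ h; case: b hb h => [b| |] // _ h; rewrite ?lte_fin in h.
  exists (a + (c - (a + b)) / 2)%:E, (b + (c - (a + b)) / 2)%:E; split.
  + by rewrite lte_fin ltrDl divr_gt0 // subr_gt0.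
  + by rewrite lte_fin ltrDl divr_gt0 // subr_gt0.
  + rewrite -EFinD lee_fin; apply: eq_le'.
    by rewrite addrACA -splitr addrC subrK.
- exists +oo, +oo; split => //.
  + by case: a ha h => [a| |] //; rewrite ?ltry // addye // ltxx.
  + by case: b hb h => [b| |] //; rewrite ?ltry // addey // ltxx.
Qed.

Lemma semicD p g h : semic p g -> semic p h -> g p != -oo -> h p != -oo ->
  semic p (fun q => g q + h q).
Proof.
move=> [g1 g2] [h1 h2] hg hh; split => r hr.
  have [r1 [r2 [lt1 lt2 le]]] := split_lower _ _ _ hg hh hr.
  apply: (filterS2 (nbhs_filter p) _ (g1 _ lt1) (h1 _ lt2)) => q a1 a2 /=.
  exact: le_lt_trans le (lteD a1 a2).
have [r1 [r2 [lt1 lt2 le]]] := split_upper _ _ _ hg hh hr.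
apply: (filterS2 (nbhs_filter p) _ (g2 _ lt1) (h2 _ lt2)) => q a1 a2 /=.
exact: lt_le_trans (lteD a1 a2) le.
Qed.




Lemma closure_min_twice {U : finType} (S : set {ptws T -> \bar R})
  (p : {ptws T -> \bar R}) (P : pred U) (F : (T -> \bar R) -> U -> \bar R) :
  (forall u, semic p (fun q => F q u)) -> (forall u, F p u != -oo) ->
  closure S p -> (forall q, S q -> min_twice P (F q)) -> min_twice P (F p).
Proof.
move=> sc fin cl HS.
rewrite /min_twice.
set m := \big[Order.min/+oo]_(t | P t) F p t.
have [mI|mnI] := eqVneq m +oo; first by left.
have [t1 Pt1 Ft1] := min_attained _ _ mnI.
case: (pselect (exists t2, [/\ t2 != t1, P t2 & F p t2 = m])) => [[t2 [ne Pt2 Ft2]] | no].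
  by right; exists t1, t2; split => //; rewrite eq_sym.
exfalso.
set m2 := \big[Order.min/+oo]_(t | P t && (t != t1)) F p t.
have mm2 : m < m2.
  apply: lt_bigmin; first by rewrite ltey.
  move=> t /andP[Pt ne]; rewrite lt_neqAle bigmin_le_cond // andbT.
  by apply/eqP => e; apply: no; exists t; split.
have [mu /andP[mmu mum2]] := ereal_dense _ _ mm2.
have near1 : nbhs p (fun q : T -> \bar R => F q t1 < mu%:E).
  by apply: (sc t1).2; rewrite Ft1.
have N : forall t, nbhs p (fun q : T -> \bar R => P t && (t != t1) -> mu%:E < F q t).
  move=> t; case Pt: (P t && (t != t1)).
    have lt : mu%:E < F p t by apply: (lt_le_trans mum2); apply: bigmin_le_cond.
    have H := (sc t).1 _ lt.
    apply: (@filterS _ _ (nbhs_filter p) _ _ _ H) => q h _; exact: h.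
  by apply: (nearW (nbhs_filter p)).
have near2 : nbhs p (fun q : T -> \bar R => forall t, P t && (t != t1) -> mu%:E < F q t).
  exact: (filter_forall (nbhs_filter p) N).
have [q [Sq [h1 h2]]] := cl _ (@filterI _ _ (nbhs_filter p) _ _ near1 near2).
have lemq : \big[Order.min/+oo]_(t | P t) F q t < mu%:E.
  exact: le_lt_trans (bigmin_le_cond _ _ Pt1) h1.
case: (HS q Sq) => [e|[u1 [u2 [ne Pu1 Pu2 e1 e2]]]].
  by move: lemq; rewrite e ltNge leey.
have [u [Pu neu eu]] : exists u, [/\ P u, u != t1 & F q u = \big[Order.min/+oo]_(t | P t) F q t].
  case: (eqVneq u1 t1) => [E|]; last by exists u1.
  by exists u2; split => //; rewrite -E eq_sym.
have := h2 u; rewrite Pu neu => /(_ isT); rewrite eu => /(lt_trans lemq).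
by rewrite ltxx.
Qed.
End Topo.



Section Val.
Variables (K : fieldType) (R : realType) (v : K -> \bar R).
Hypothesis hv : nontriv_nonarch_valuation v.
Local Open Scope ereal_scope.

Lemma v0 : v 0 = +oo. Proof. by case: hv => h _ _ _ _; apply/h. Qed.
Lemma vM x y : v (x * y)%R = v x + v y. Proof. by case: hv. Qed.
Lemma vNinf x : v x != -oo. Proof. by case: hv. Qed.
Lemma vD x y : Order.min (v x) (v y) <= v (x + y)%R. Proof. by case: hv. Qed.
Lemma vpinf x : x != 0%R -> v x != +oo.
Proof. by case: hv => h _ _ _ _ xn; apply/eqP => /h; apply/eqP. Qed.

Lemma double0 (x : \bar R) : x != +oo -> x != -oo -> x + x = 0 -> x = 0.
Proof.
case: x => [r| |] //= _ _ h; congr EFin; move: h; rewrite -EFinD => -[] h.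
lra.
Qed.

Lemma v1 : v 1 = 0.
Proof.
have h := vM 1 1; rewrite mulr1 in h.
move: h (@vpinf 1%R (oner_neq0 K)) (vNinf 1%R).
case: (v 1%R) => [r| |] //= h _ _; congr EFin; move: h; rewrite -EFinD => -[] h.
lra.
Qed.

Lemma v_sgnu (u : K) : @sgnu K u -> v u = 0.
Proof.
move=> su; have un : u != 0%R by apply: contra_eq_neq su => ->; rewrite mulr0 eq_sym oner_neq0.
apply: double0; [exact: vpinf|exact: vNinf|].
by rewrite -vM su v1.
Qed.

Lemma vN x : v (- x)%R = v x.
Proof. by rewrite -mulN1r vM (@v_sgnu _ (sgnu_sign K true)) add0e. Qed.

Lemma v_sum {U : finType} (Q : pred U) (H : U -> K) :
  \big[Order.min/+oo]_(t | Q t) v (H t) <= v (\sum_(t | Q t) H t)%R.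
Proof.
apply: (big_ind2 (fun a s => a <= v s)).
- by rewrite v0.
- move=> a b c d h1 h2; apply: le_trans (vD b d).
  by rewrite le_min !ge_min h1 h2 orbT.
- by move=> t _.
Qed.


Lemma NA_min_twice {U : finType} (P : pred U) (H : U -> K) (f : U -> \bar R) (c : R) :
  (\sum_(t | P t) H t = 0)%R -> (forall t, P t -> f t = v (H t) + c%:E) -> min_twice P f.
Proof.
move=> hs hf; rewrite /min_twice.
set m := \big[Order.min/+oo]_(t | P t) f t.
have [mI|mnI] := eqVneq m +oo; first by left.
have [t1 Pt1 Ft1] := min_attained _ _ mnI.
case: (pselect (exists t2, [/\ t2 != t1, P t2 & f t2 = m])) => [[t2 [ne Pt2 Ft2]] | no].
  by right; exists t1, t2; split => //; rewrite eq_sym.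
exfalso.
have gt : forall t, P t && (t != t1) -> v (H t1) < v (H t).
  move=> t /andP[Pt ne].
  have : f t1 < f t.
    rewrite Ft1 lt_neqAle bigmin_le_cond // andbT.
    by apply/eqP => e; apply: no; exists t; split.
  by rewrite !hf // lteD2rE.
have fin1 : v (H t1) != +oo.
  by apply: contra_neq mnI => e; rewrite /m -Ft1 hf // e addye.
have lt2 : v (H t1) < \big[Order.min/+oo]_(t | P t && (t != t1)) v (H t).
  by apply: lt_bigmin; [rewrite ltey | exact: gt].
have := v_sum (fun t => P t && (t != t1)) H.
move: hs; rewrite (bigD1 t1) //= => /eqP; rewrite addrC addr_eq0 => /eqP ->.
rewrite vN => h; have := lt_le_trans lt2 h; by rewrite ltxx.
Qed.

End Val.

Section Glue.
Local Open Scope ereal_scope.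

Lemma addNinf {R : realType} (x y : \bar R) : x != -oo -> y != -oo -> x + y != -oo.
Proof. by case: x => [x| |]; case: y => [y| |]. Qed.

Lemma semic_pcoord {R : realType} {V : finType} {n : nat} {d : V -> nat}
  (p : {ptws Coord V n d -> \bar R}) i X : semic p (fun q => pcoord q i X).
Proof. by rewrite /pcoord; case: insub => [x|]; [exact: semic_proj | exact: semic_cst]. Qed.

Lemma pcoord_nNinf {R : realType} {V : finType} {n : nat} {d : V -> nat}
  (p : Coord V n d -> \bar R) i X : (forall x, p x != -oo) -> pcoord p i X != -oo.
Proof. by move=> h; rewrite /pcoord; case: insub. Qed.

Lemma pcoord_trop {K : fieldType} {R : realType} (v : K -> \bar R) {V : finType} {n : nat}
  {d : V -> nat} (B : forall i : V, 'M[K]_(d i, n)) (c : V -> R)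
  (q : Coord V n d -> \bar R)
  (hq : forall x, q x = v (plucker_vec B x) + (c (val x).1)%:E) i (X : {set 'I_n}) (h : #|X| = d i) :
  pcoord q i X = v (plucker (B i) X h) + (c i)%:E.
Proof.
rewrite /pcoord; case: insubP => [x _ vx|]; last by rewrite /= h eqxx.
rewrite hq /plucker_vec; move: x vx => [[i' X'] hx] /= [ei eX]; subst i' X'.
by congr (v _ + _); congr plucker; apply: eq_irrelevance.
Qed.

Lemma containment (K : fieldType) (R : realType) (v : K -> \bar R)
  (hv : nontriv_nonarch_valuation v) (V Arr : finType) (src tgt : Arr -> V) (n : nat)
  (A : Arr -> 'M[K]_n) (d : V -> nat) :
  tropQGr_closure v src tgt A d `<=` QDr v src tgt A d.
Proof.
move=> p [cl tp]; have pN : forall x, p x != -oo by case: tp.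
split; first exact: tp.
split.
- move=> i I J hI hJ.
  apply: (@closure_min_twice R (Coord V n d) _ (tropQGr v src tgt A d) p _
    (fun q j => pcoord q i (j |: I) + pcoord q i (J :\ j))).
  + move=> j; apply: semicD; try exact: semic_pcoord; exact: pcoord_nNinf.
  + by move=> j; apply: addNinf; exact: pcoord_nNinf.
  + exact: cl.
  move=> q [B [c [rf sub hq]]].
  have [H [sH hH]] := GP_alg K (B i) hI hJ.
  apply: (@NA_min_twice K R v hv _ _ H _ (c i + c i)%R sH) => j /andP[jJ jI].
  have h1 : #|j |: I| = d i by rewrite cardsU1 jI -hI.
  have h2 : #|J :\ j| = d i.
    by apply/eqP; rewrite -eqSS -hJ (cardsD1 j J) jJ.
  have [u [su ->]] := hH j (introT andP (conj jJ jI)) h1 h2.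
  rewrite (pcoord_trop v _ _ _ hq _ _ h1) (pcoord_trop v _ _ _ hq _ _ h2) !(vM _ _ _ hv) (v_sgnu _ _ _ hv _ su) add0e EFinD.
  by rewrite addrACA.
- move=> a I J hI hJ.
  apply: (@closure_min_twice R (Coord V n d) _ (tropQGr v src tgt A d) p _
    (fun q ji => v (A a ji.2 ji.1) + pcoord q (src a) (ji.1 |: I) + pcoord q (tgt a) (J :\ ji.2))).
  + move=> ji; apply: semicD; last exact: pcoord_nNinf.
    * apply: semicD; [exact: semic_cst|exact: semic_pcoord|exact: (vNinf _ _ _ hv)|exact: pcoord_nNinf].
    * exact: semic_pcoord.
    * by apply: addNinf; [exact: (vNinf _ _ _ hv)|exact: pcoord_nNinf].
  + by move=> ji; apply: addNinf; [apply: addNinf; [exact: (vNinf _ _ _ hv)|exact: pcoord_nNinf]|exact: pcoord_nNinf].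
  + exact: cl.
  move=> q [B [c [rf sub hq]]].
  have [H [sH hH]] := Q_alg (sub a) hI hJ.
  apply: (@NA_min_twice K R v hv _ _ H _ (c (src a) + c (tgt a))%R sH) => [[j i]] /andP[/= jI iJ].
  have h1 : #|j |: I| = d (src a) by rewrite cardsU1 jI -hI.
  have h2 : #|J :\ i| = d (tgt a).
    by apply/eqP; rewrite -eqSS -hJ (cardsD1 i J) iJ.
  have [u [su ->]] := hH (j, i) (introT andP (conj jI iJ)) h1 h2.
  rewrite /= (pcoord_trop v _ _ _ hq _ _ h1) (pcoord_trop v _ _ _ hq _ _ h2) !(vM _ _ _ hv) (v_sgnu _ _ _ hv _ su) add0e EFinD.
  by rewrite !addrA; congr (_ + _); rewrite addrAC.
Qed.

End Glue.



Section MT.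
Local Open Scope ereal_scope.
Context {R : realType} {U : finType}.

Lemma mt_le (P : pred U) (f : U -> \bar R) t1 t2 : P t1 -> P t2 -> t1 != t2 ->
  f t1 = f t2 -> (forall t, P t -> f t1 <= f t) -> min_twice P f.
Proof.
move=> P1 P2 ne e hle; right; exists t1, t2.
have m : \big[Order.min/+oo]_(t | P t) f t = f t1.
  apply/le_anti; rewrite bigmin_le_cond //=.
  by apply: le_bigmin => //; exact: leey.
by rewrite m; split.
Qed.

Lemma mt_inf (P : pred U) (f : U -> \bar R) : (forall t, P t -> f t = +oo) -> min_twice P f.
Proof.
move=> h; left; apply/le_anti; rewrite leey /=.
by apply: le_bigmin => // t Pt; rewrite h.
Qed.
End MT.

Section C0.
Variables (K : fieldType) (R : realType) (v : K -> \bar R).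
Hypothesis hv : nontriv_nonarch_valuation v.
Local Open Scope ereal_scope.

Lemma exists_c0 : exists c0 : K, c0 != 1%R /\ v c0 = 0.
Proof.
have [x [xn vx]] : exists x, x != 0%R /\ v x != 0 by case: hv.
have [t [tn vt]] : exists t : K, t != 0%R /\ 0 < v t.
  case: (ltP 0 (v x)) => h; first by exists x.
  exists x^-1%R; split; first by rewrite invr_eq0.
  have : v (x * x^-1)%R = 0 by rewrite mulfV // (v1 _ _ _ hv).
  rewrite (vM _ _ _ hv).
  move: vx h (vNinf _ _ _ hv x) (vpinf _ _ _ hv x xn) (vNinf _ _ _ hv x^-1%R).
  case: (v x) => [s| |] //; case: (v x^-1%R) => [r| |] //= vx h _ _ _.
  rewrite -EFinD => -[] e; rewrite lte_fin; rewrite lee_fin in h.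
  have : s != 0%R by apply: contra vx => /eqP ->.
  move=> sn; have : (s < 0)%R by rewrite lt_neqAle sn h.
  lra.
exists (1 + t)%R; split.
  apply: contra tn => /eqP e; have -> : t = ((1 + t) - 1)%R by rewrite addrAC subrr add0r.
  by rewrite e subrr.
have ge : 0 <= v (1 + t)%R.
  by apply: le_trans (vD _ _ _ hv 1 t); rewrite le_min (v1 _ _ _ hv) lexx ltW.
apply/le_anti; rewrite ge andbT leNgt; apply/negP => gt.
have := vD _ _ _ hv (1 + t)%R (- t)%R; rewrite addrK (v1 _ _ _ hv) (vN _ _ _ hv) ge_min => /orP[].
  by rewrite leNgt gt.
by rewrite leNgt vt.
Qed.
End C0.

Local Close Scope classical_set_scope.
Local Open Scope ring_scope.

Lemma plucker1 {K : fieldType} {n} (B : 'M[K]_(1, n)) (k : 'I_n) (h : #|[set k]| = 1%N) :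
  plucker B [set k] h = B 0 k.
Proof.
rewrite /plucker det_mx11 mxE.
by have := enum_valP (cast_ord (esym h) 0); rewrite inE => /eqP ->.
Qed.

Lemma addif {R : realType} (a b : bool) :
  ((if a then 0 else +oo) + (if b then 0 else +oo) = if a && b then 0 else +oo :> \bar R)%E.
Proof. by case: a; case: b; rewrite /= ?adde0 ?add0e. Qed.

Section Ex.
Variables (K : fieldType) (R : realType) (v : K -> \bar R).
Hypothesis hv : nontriv_nonarch_valuation v.
Variable n' : nat.
Let N := n'.+2.
Let i0 : 'I_N := ord0.
Let i1 : 'I_N := lift ord0 ord0.
Let S : {set 'I_N} := [set i0; i1].
Variable c0 : K.
Hypothesis c0n1 : c0 != 1.
Hypothesis vc0 : v c0 = 0%E.

Let A : unit -> 'M[K]_N := fun _ =>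
  \matrix_(i, j) if i == j then (if i == i0 then 1 else if i == i1 then c0 else 0) else 0.
Let d : unit -> nat := fun _ => 1%N.
Let src : unit -> unit := fun _ => tt.

Let p : Coord unit N d -> \bar R := fun x => if (val x).2 \subset S then 0%E else +oo%E.

Lemma i01 : i0 != i1. Proof. exact: neq_lift. Qed.

Lemma pcE X : pcoord p tt X = if (#|X| == 1%N) && (X \subset S) then 0%E else +oo%E.
Proof.
rewrite /pcoord; case: insubP => [x hx vx|hx].
  by rewrite /p vx /=; move: hx => /= ->.
by move: hx => /= /negbTE ->.
Qed.

Lemma pNinf x : p x != -oo%E. Proof. by rewrite /p; case: ifP. Qed.

Lemma pc_ge0 X : (0 <= pcoord p tt X)%E. Proof. by rewrite pcE; case: ifP. Qed.

Lemma vA_ge0 i j : (0 <= v (A tt i j))%E.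
Proof.
rewrite mxE; case: ifP => _; last by rewrite (v0 _ _ _ hv) leey.
case: ifP => _; first by rewrite (v1 _ _ _ hv).
case: ifP => _; first by rewrite vc0.
by rewrite (v0 _ _ _ hv) leey.
Qed.

Lemma two_elems (J : {set 'I_N}) : #|J| = 2%N -> exists a b, [/\ a \in J, b \in J & a != b].
Proof.
move=> hJ; have : (0 < #|J|)%N by rewrite hJ.
rewrite card_gt0 => /set0Pn [a aJ].
have : #|J :\ a| = 1%N by apply/eqP; rewrite -eqSS -hJ (cardsD1 a J) aJ.
move/eqP/cards1P => [b hb].
have : b \in J :\ a by rewrite hb finset.set11.
rewrite !inE => /andP[ba bJ]; exists a, b; split => //; by rewrite eq_sym.
Qed.

Lemma p_QDr : QDr v src src A d p.
Proof.
split; [split|split].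
- exact: pNinf.
- move=> [] /=.
  have h : #|[set i0]| == d tt by rewrite cards1.
  exists (Sub (tt, [set i0]) h); split => //.
  by rewrite /p /= finset.sub1set !inE eqxx.
- move=> [] I J hI hJ.
  have I0 : I = finset.set0 by apply: cards0_eq; case: hI.
  subst I.
  have [a [b [aJ bJ ab]]] := two_elems J hJ.
  have fE : forall j, j \in J -> (pcoord p tt (j |: finset.set0) + pcoord p tt (J :\ j))%E =
      if J \subset S then 0%E else +oo%E.
    move=> j jJ; rewrite !pcE addif finset.setU0 cards1 /=.
    have -> : #|J :\ j| == 1%N by rewrite -eqSS -hJ (cardsD1 j J) jJ.
    by rewrite -{2}(finset.setD1K jJ) finset.subUset.
  apply: (@mt_le _ _ _ _ a b); rewrite ?inE ?aJ ?bJ ?fE //.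
  by move=> t /andP[tJ _]; rewrite fE.
- move=> [] I J hI hJ.
  have I0 : I = finset.set0 by apply: cards0_eq; case: hI.
  subst I.
  case sJ: (J \subset S).
  + have JS : J = S.
      by apply/eqP; rewrite eqEcard sJ /= cards2 i01 hJ.
    subst J.
    have S0 : S :\ i0 = [set i1].
      apply/setP => x; rewrite !inE; case: (eqVneq x i0) => [->|] //=.
    have S1 : S :\ i1 = [set i0].
      apply/setP => x; rewrite !inE; case: (eqVneq x i1) => [->|] //=; rewrite ?orbF //.
    have A00 : A tt i0 i0 = 1 by rewrite mxE !eqxx.
    have A11 : A tt i1 i1 = c0 by rewrite mxE eqxx eq_sym (negbTE i01).
    have pc1 : forall k, k \in S -> pcoord p tt [set k] = 0%E.
      by move=> k kS; rewrite pcE cards1 finset.sub1set kS.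
    have i0S : i0 \in S by rewrite !inE eqxx.
    have i1S : i1 \in S by rewrite !inE eqxx orbT.
    apply: (@mt_le _ _ _ _ (i0, i0) (i1, i1)) => /=.
    * by rewrite inE i0S.
    * by rewrite inE i1S.
    * by [].
    * rewrite !finset.setU0 S0 S1 A00 A11 vc0 (v1 _ _ _ hv) !pc1 //.
    * move=> t _; rewrite finset.setU0 S0 A00 (v1 _ _ _ hv) !pc1 // !adde0.
      by apply: adde_ge0; [apply: adde_ge0; [exact: vA_ge0|exact: pc_ge0]|exact: pc_ge0].
  + apply: mt_inf => [[j i]] /andP[/= _ iJ].
    have hpc : forall X, pcoord p (src tt) X != -oo%E by move=> X; rewrite pcE; case: ifP.
    case: (eqVneq i j) => [ij|ne]; last first.
      rewrite mxE (negbTE ne) (v0 _ _ _ hv) !addye //; exact: hpc.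
    subst j; case iS: (i \in S).
      have nsub : ~~ (J :\ i \subset S).
        apply: contraFN sJ => h.
        by rewrite -(finset.setD1K iJ) finset.subUset finset.sub1set iS h.
      rewrite (pcE (J :\ i)) (negbTE nsub) andbF addey //.
      by apply: addNinf; [exact: (vNinf _ _ _ hv) | exact: hpc].
    rewrite mxE eqxx.
    have -> : (i == i0) = false by apply: contraFF iS => /eqP ->; rewrite !inE eqxx.
    have -> : (i == i1) = false by apply: contraFF iS => /eqP ->; rewrite !inE eqxx orbT.
    rewrite (v0 _ _ _ hv) !addye //; exact: hpc.
Qed.


Lemma diag_entry (B : 'M[K]_(1, N)) k : (B *m (A tt)^T) 0 k = B 0 k * A tt k k.
Proof.
rewrite mxE (bigD1 k) //= big1 ?addr0; first by rewrite mxE.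
by move=> j jk; rewrite !mxE eq_sym (negbTE jk) mulr0.
Qed.

Lemma p_notcl : ~ tropQGr_closure v src src A d p.
Proof.
move=> [cl _].
have h0 : #|[set i0]| == d tt by rewrite cards1.
have h1 : #|[set i1]| == d tt by rewrite cards1.
pose x0 : Coord unit N d := Sub (tt, [set i0]) h0.
pose x1 : Coord unit N d := Sub (tt, [set i1]) h1.
have lt0 : (p x0 < 1%:E)%E by rewrite /p /= finset.sub1set !inE eqxx lte01.
have lt1 : (p x1 < 1%:E)%E by rewrite /p /= finset.sub1set !inE eqxx orbT lte01.
have n0 := (semic_proj (p : {ptws Coord unit N d -> \bar R}) x0).2 _ lt0.
have n1 := (semic_proj (p : {ptws Coord unit N d -> \bar R}) x1).2 _ lt1.
have [q [[B [c [rf sub hq]]] [q0 q1]]] := cl _ (@filterI _ _ (nbhs_filter _) _ _ n0 n1).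
have nz : forall (x : Coord unit N d) k, (val x).2 = [set k] -> (q x < 1%:E)%E -> B tt 0 k != 0.
  move=> [[[] X] hx] k /= eX qx; subst X; apply/eqP => B0.
  move: qx; rewrite hq /plucker_vec /= plucker1 B0 (v0 _ _ _ hv) addye //.
have b0 := nz x0 i0 erefl q0.
have b1 := nz x1 i1 erefl q1.
have /submxP [D hD] := sub tt.
have e : forall k, B tt 0 k * A tt k k = D 0 0 * B tt 0 k.
  move=> k; rewrite -(diag_entry (B tt)) hD mxE big_ord1.
  by congr (_ * _); apply: val_inj.
have D1 : D 0 0 = 1.
  by apply: (mulIf b0); rewrite mul1r -(e i0) mxE !eqxx mulr1.
have : c0 = 1.
  apply: (mulIf b1); rewrite -D1 -(e i1) mxE eqxx eq_sym (negbTE i01) mulrC.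
  by [].
by move/eqP; rewrite (negbTE c0n1).
Qed.

Lemma ex_strict : exists (V Arr : finType) (src tgt : Arr -> V) (A' : Arr -> 'M[K]_N)
  (d' : V -> nat), (forall i, (d' i <= N)%N) /\
  (tropQGr_closure v src tgt A' d' `<` QDr v src tgt A' d')%classic.
Proof.
exists unit, unit, src, src, A, d; split; first by [].
split; first exact: containment.
by move=> H; apply: p_notcl; exact: H _ p_QDr.
Qed.
End Ex.

Local Open Scope classical_set_scope.
Local Close Scope classical_set_scope.

Lemma card_I1 (X : {set 'I_1}) : #|X| = (ord0 \in X).
Proof.
case: (boolP (ord0 \in X)) => h.
  have -> : X = [set: 'I_1]%SET by apply/setP => j; rewrite (ord1 j) h inE.
  by rewrite cardsT card_ord.
have -> : X = finset.set0 by apply/setP => j; rewrite (ord1 j) (negbTE h) inE.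
by rewrite cards0.
Qed.

Lemma set_I1_inj (X Y : {set 'I_1}) : #|X| = #|Y| -> X = Y.
Proof.
rewrite !card_I1 => e; apply/setP => j; rewrite (ord1 j).
by case: (ord0 \in X) e; case: (ord0 \in Y).
Qed.

Lemma plucker_ones {K : fieldType} m (X : {set 'I_1}) (h : #|X| = m) : (m <= 1)%N ->
  plucker (const_mx 1 : 'M[K]_(m, 1)) X h = 1.
Proof.
case: m h => [|[|m]] h hm //.
  by rewrite /plucker det_mx00.
by rewrite /plucker det_mx11 !mxE.
Qed.

Section Part1.
Variables (K : fieldType) (R : realType) (v : K -> \bar R).
Hypothesis hv : nontriv_nonarch_valuation v.
Variables (V Arr : finType) (src tgt : Arr -> V) (A : Arr -> 'M[K]_1) (d : V -> nat).
Hypothesis hd : forall i, (d i <= 1)%N.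

Let S i : {set 'I_1} := [set j : 'I_1 | d i == 1%N].

Lemma cardS i : #|S i| = d i.
Proof.
rewrite card_I1 inE; have := hd i.
by case: (d i) => [|[|]].
Qed.

Lemma coord_set (x : Coord V 1 d) : (val x).2 = S (val x).1.
Proof. apply: set_I1_inj; rewrite cardS; exact/eqP/(valP x). Qed.

Lemma coord_uniq (x y : Coord V 1 d) : (val x).1 = (val y).1 -> x = y.
Proof.
move=> e; apply: val_inj.
by rewrite [val x]surjective_pairing [val y]surjective_pairing coord_set [in RHS]coord_set e.
Qed.

Variable p : Coord V 1 d -> \bar R.
Hypothesis tp : tropproj p.

Lemma p_fin x : p x \is a fin_num.
Proof.
case: tp => h1 /(_ (val x).1) [y [ey hy]].
have exy : y = x by apply: coord_uniq.
by rewrite fin_numE h1 -exy hy.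
Qed.

Lemma pcoord_val (x : Coord V 1 d) : pcoord p (val x).1 (val x).2 = p x.
Proof. by rewrite /pcoord -surjective_pairing valK. Qed.

Lemma pcoord_fin i (X : {set 'I_1}) : #|X| = d i -> pcoord p i X \is a fin_num.
Proof.
move=> h; rewrite /pcoord; case: insubP => [x _ _|]; first exact: p_fin.
by rewrite /= h eqxx.
Qed.


Lemma mt_single {U : finType} (P : pred U) (f : U -> \bar R) t0 :
  (forall t, t = t0) -> min_twice P f -> P t0 -> f t0 = +oo%E.
Proof.
move=> all [m|[t1 [t2 [ne _ _ _ _]]]]; last by move: ne; rewrite (all t1) (all t2) eqxx.
move=> Pt0; rewrite -m; apply/le_anti; rewrite bigmin_le_cond //= andbT.
by apply: le_bigmin => [|t _]; [exact: leey|rewrite (all t)].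
Qed.

Lemma I11 (t : 'I_1 * 'I_1) : t = (ord0, ord0).
Proof. by case: t => a b; rewrite (ord1 a) (ord1 b). Qed.

Lemma A_zero a : d (src a) = 1%N -> d (tgt a) = 0%N -> QDr v src tgt A d p -> A a 0 0 = 0.
Proof.
move=> ds dt [_ [_ hq]].
have h1 : #|(finset.set0 : {set 'I_1})|.+1 = d (src a) by rewrite cards0 ds.
have h2 : #|[set: 'I_1]%SET| = (d (tgt a)).+1 by rewrite cardsT card_ord dt.
have := mt_single _ _ _ I11 (hq a _ _ h1 h2); rewrite !inE /= => /(_ isT) finf.
move: finf => /=.
have f1 : pcoord p (src a) (ord0 |: finset.set0) \is a fin_num.
  by apply: pcoord_fin; rewrite finset.setU0 cards1 ds.
have f2 : pcoord p (tgt a) ([set: 'I_1]%SET :\ ord0) \is a fin_num.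
  have -> : ([set: 'I_1]%SET :\ ord0) = finset.set0 by apply/setP => j; rewrite (ord1 j) !inE eqxx.
  by apply: pcoord_fin; rewrite cards0 dt.
move=> e; apply/eqP; case: hv => h _ _ _ _; apply/eqP; apply/h.
apply/eqP; apply: contraLR isT => hA.
have fA : v (A a 0 0) \is a fin_num by rewrite fin_numE hA; case: hv => _ h' _ _ _; rewrite h'.
by move: e; rewrite -!addeA => e; have := fin_numD (v (A a 0 0)) (pcoord p (src a) (ord0 |: finset.set0) + pcoord p (tgt a) ([set: 'I_1]%SET :\ ord0)); rewrite e /= fA fin_numD f1 f2.
Qed.


Lemma part1_sub : QDr v src tgt A d p -> tropQGr v src tgt A d p.
Proof.
move=> pQ.
pose B i : 'M[K]_(d i, 1) := const_mx 1.
pose c i := fine (pcoord p i (S i)).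
have rfB : forall i, row_free (B i).
  move=> i; rewrite /row_free eqn_leq rank_leq_row /=.
  have := hd i; rewrite leq_eqVlt ltnS leqn0 => /orP[] /eqP E; rewrite [X in (X <= _)%N]E //.
  rewrite lt0n mxrank_eq0; apply/eqP => /matrixP /(_ (cast_ord (esym E) ord0) ord0).
  by rewrite !mxE => /eqP; rewrite oner_eq0.
exists B, c; split.
- exact: rfB.
- move=> a; case: (eqVneq (d (tgt a)) 1%N) => dt.
    apply: submx_full; rewrite /row_full; have := rfB (tgt a).
    by rewrite /row_free => /eqP ->; rewrite dt.
  have dt0 : d (tgt a) = 0%N by have := hd (tgt a); case: (d (tgt a)) dt => [|[|]].
  suff -> : B (src a) *m (A a)^T = 0 by apply: sub0mx.
  apply/matrixP => r k; rewrite !mxE big_ord1 !mxE (ord1 k).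
  case: (eqVneq (d (src a)) 1%N) => ds.
    by rewrite (A_zero _ ds dt0 pQ) mulr0.
  have ds0 : d (src a) = 0%N by have := hd (src a); case: (d (src a)) ds => [|[|]].
  by have := ltn_ord r; rewrite [X in (_ < X)%N]ds0.
- move=> x; rewrite /plucker_vec /B plucker_ones ?hd // (v1 _ _ _ hv) add0e /c.
  by rewrite -coord_set pcoord_val fineK // p_fin.
Qed.

End Part1.

Lemma part1 (K : fieldType) (R : realType) (v : K -> \bar R)
  (hv : nontriv_nonarch_valuation v) (V Arr : finType) (src tgt : Arr -> V)
  (A : Arr -> 'M[K]_1) (d : V -> nat) : (forall i, (d i <= 1)%N) ->
  QDr v src tgt A d = tropQGr_closure v src tgt A d.
Proof.
move=> hd; apply/seteqP; split; last exact: containment.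
move=> p pQ; have tp : tropproj p by case: pQ.
split; last exact: tp.
apply: subset_closure; exact: part1_sub.
Qed.


Local Open Scope classical_set_scope.
Local Open Scope ring_scope.

Theorem theoremD (K : closedFieldType) (R : realType) (v : K -> \bar R)
    (hv : nontriv_nonarch_valuation v) :
  (forall (V Arr : finType) (src tgt : Arr -> V) (A : Arr -> 'M[K]_1)
          (d : V -> nat),
      (forall i, (d i <= 1)%N) ->
      QDr v src tgt A d = tropQGr_closure v src tgt A d) /\
  (forall n : nat, (2 <= n)%N ->
     (forall (V Arr : finType) (src tgt : Arr -> V) (A : Arr -> 'M[K]_n)
             (d : V -> nat),
        (forall i, (d i <= n)%N) ->
        tropQGr_closure v src tgt A d `<=` QDr v src tgt A d) /\
     (exists (V Arr : finType) (src tgt : Arr -> V) (A : Arr -> 'M[K]_n)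
             (d : V -> nat),
        (forall i, (d i <= n)%N) /\
        tropQGr_closure v src tgt A d `<` QDr v src tgt A d)).
Proof.
split.
  by move=> V Arr src tgt A d hd; apply: part1.
move=> n hn; split.
  by move=> V Arr src tgt A d _; apply: containment.
have [c0 [c0n1 vc0]] := exists_c0 _ _ _ hv.
case: n hn => [|[|n']] // _.
exact: (@ex_strict _ _ _ hv n' c0 c0n1 vc0).
Qed.
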